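(* If a graph $G$ has $n\ge 1$ vertices, then $m(G)\le \lceil n/3\rceil+1$.
   Context: All graphs are finite, simple and undirected. A list assignment $L$ for a graph $G$ assigns to each vertex $v$ a set $L(v)$ of colors; an $L$-coloring is a proper vertex coloring $c$ of $G$ with $c(v)\in L(v)$ for every vertex $v$. A $k$-list assignment is a list assignment with $|L(v)|=k$ for all $v$. $G$ is uniquely $k$-list colorable (U$k$LC) if there exists a $k$-list assignment $L$ such that $G$ has exactly one $L$-coloring. $G$ has property $M(k)$ if it is not U$k$LC, i.e. for every $k$-list assignment $L$, $G$ has either no $L$-coloring or at least two $L$-colorings. The m-number $m(G)$ is the least integer $k\ge 1$ such that $G$ has property $M(k)$. (Every U$k$LC graph is also U$(k-1)$LC, so $G$ is U$k$LC iff $k<m(G)$.) *)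

(* Defs.v *)
From mathcomp Require Import all_boot.
Set Implicit Arguments. Unset Strict Implicit. Unset Printing Implicit Defensive.

(* Colors are natural numbers (any countable palette suffices: only finitely many
   colors occur in a list assignment). *)

Definition simple_graph (T : finType) (e : rel T) : Prop :=
  symmetric e /\ irreflexive e.

Definition k_list_assignment (T : finType) (k : nat) (L : T -> seq nat) : Prop :=
  forall v, uniq (L v) /\ size (L v) = k.

Definition L_coloring (T : finType) (e : rel T) (L : T -> seq nat) (c : T -> nat) : Prop :=
  (forall v, c v \in L v) /\ (forall x y, e x y -> c x != c y).

Definition unique_L_colorable (T : finType) (e : rel T) (L : T -> seq nat) : Prop :=
  exists c, L_coloring e L c /\ forall c', L_coloring e L c' -> forall v, c' v = c v.

Definition UkLC (T : finType) (e : rel T) (k : nat) : Prop :=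
  exists L, @k_list_assignment T k L /\ unique_L_colorable e L.

Definition propM (T : finType) (e : rel T) (k : nat) : Prop := ~ UkLC e k.

Definition is_m_number (T : finType) (e : rel T) (m : nat) : Prop :=
  1 <= m /\ propM e m /\ forall k, 1 <= k -> k < m -> ~ propM e k.

Definition ceil_div (n d : nat) : nat := (n + d.-1) %/ d.

(* Main.v *)
Require Import Defs.
From mathcomp Require Import all_boot zify.
From Stdlib Require Import Classical.
Set Implicit Arguments. Unset Strict Implicit. Unset Printing Implicit Defensive.

Definition isCol (T K : finType) (e : rel T) (P : {set T}) (L : T -> {set K}) (c : T -> K) :=
  (forall v, v \in P -> c v \in L v) /\
  (forall x y, x \in P -> y \in P -> e x y -> c x != c y).

Definition isUniq (T K : finType) (e : rel T) (P : {set T}) (L : T -> {set K}) (c : T -> K) :=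
  isCol e P L c /\ forall c', isCol e P L c' -> forall v, v \in P -> c' v = c v.

Lemma L0 (T K : finType) (e : rel T) P L (c : T -> K) v b :
  isUniq e P L c -> v \in P -> b \in L v -> b \in c @: P.
Proof.
move=> [[HL Hp] Hu] Hv Hb.
case: (boolP (b \in c @: P)) => // Hn; exfalso.
pose c' := fun u => if u == v then b else c u.
have Hc : isCol e P L c'.
  split.
    by move=> u Hu'; rewrite /c'; case: (u =P v) => [->|_] //; apply: HL.
  move=> x y Hx Hy Hxy; rewrite /c'.
  case: (x =P v) => [Ex|_]; case: (y =P v) => [Ey|_].
  - by subst; have := Hp _ _ Hy Hy Hxy; rewrite eqxx.
  - by apply/eqP => E; move: Hn; rewrite E imset_f.
  - by apply/eqP => E; move: Hn; rewrite -E imset_f.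
  - exact: Hp.
have := Hu c' Hc v Hv; rewrite /c' eqxx => E.
by move: Hn; rewrite E imset_f.
Qed.

Lemma cyc (K : finType) (f : K -> K) : forall n (Q : {set K}), #|Q| <= n ->
  Q != set0 -> f @: Q \subset Q ->
  exists Y : {set K}, [/\ Y != set0, Y \subset Q, f @: Y \subset Y & {in Y &, injective f}].
Proof.
elim=> [|n IH] Q Hn Q0 HQ.
  by move: Q0; rewrite -card_gt0; case: #|Q| Hn.
case: (boolP (Q \subset f @: Q)) => Hs.
  exists Q; split => //.
  apply/imset_injP; rewrite eqn_leq leq_imset_card /=.
  exact: subset_leq_card.
have [x0 Hx0] : exists x0, x0 \in Q :\: f @: Q.
  by apply/set0Pn; rewrite setD_eq0.
move: Hx0; rewrite inE => /andP [Hx0f Hx0Q].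
have HQ' : f @: (Q :\ x0) \subset Q :\ x0.
  apply/subsetP => y /imsetP [z Hz ->].
  rewrite !inE; apply/andP; split.
    apply/eqP => E; move: Hx0f; rewrite -E imset_f //.
    by move: Hz; rewrite !inE => /andP [].
  apply: (subsetP HQ); apply: imset_f; by move: Hz; rewrite !inE => /andP [].
have Q'0 : Q :\ x0 != set0.
  apply/negP => /eqP E.
  have Hf : f x0 \in Q by apply: (subsetP HQ); apply: imset_f.
  have : f x0 \in Q :\ x0 -> False by rewrite E inE.
  rewrite !inE Hf andbT => H.
  case: (eqVneq (f x0) x0) => [Ef|Nf]; last by apply: H.
  by move: Hx0f; rewrite -{1}Ef imset_f.
have Hc : #|Q :\ x0| <= n.
  by move: Hn; rewrite (cardsD1 x0 Q) Hx0Q.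
have [Y [Y0 YQ fY fi]] := IH _ Hc Q'0 HQ'.
exists Y; split => //.
apply: (subset_trans YQ); exact: subsetDl.
Qed.

Definition arr (T K : finType) (P : {set T}) (L : T -> {set K}) (c : T -> K) (a b : K) : bool :=
  [forall v in P, (c v == a) ==> (b \in L v)].

Lemma sink (T K : finType) (e : rel T) P L (c : T -> K) (Q : {set K}) :
  isUniq e P L c -> Q \subset c @: P -> Q != set0 ->
  exists2 a, a \in Q & forall b, b \in Q -> b != a -> ~~ arr P L c a b.
Proof.
move=> [[HL Hp] Hu] QP Q0.
case: (boolP [exists a in Q, [forall b in Q, (b != a) ==> ~~ arr P L c a b]]).
  move=> /exists_inP [a Ha /forall_inP H]; exists a => // b Hb Nb.
  by have := H b Hb; rewrite Nb.
move=> Hn; exfalso.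
have H : forall a, a \in Q -> exists b, (b \in Q) && ((b != a) && arr P L c a b).
  move=> a Ha; apply/existsP.
  move: Hn; rewrite negb_exists_in => /forall_inP /(_ a Ha).
  rewrite negb_forall_in => /exists_inP [b Hb].
  by rewrite negb_imply negbK => Hab; apply/existsP; exists b; rewrite Hb.
pose f a := odflt a [pick b | (b \in Q) && ((b != a) && arr P L c a b)].
have Hf : forall a, a \in Q -> [/\ f a \in Q, f a != a & arr P L c a (f a)].
  move=> a Ha; rewrite /f; case: pickP => [b /and3P [] //|Hnone].
  by have [b Hb] := H a Ha; rewrite Hnone in Hb.
have fQ : f @: Q \subset Q.
  by apply/subsetP => y /imsetP [z Hz ->]; have [] := Hf z Hz.
have [Y [Y0 YQ fY fi]] := cyc (leqnn #|Q|) Q0 fQ.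
pose c' v := if c v \in Y then f (c v) else c v.
have Hc : isCol e P L c'.
  split.
    move=> v Hv; rewrite /c'; case: ifP => HY; last exact: HL.
    have [_ _ /forall_inP A] := Hf _ (subsetP YQ _ HY).
    by have := A v Hv; rewrite eqxx.
  move=> x y Hx Hy Hxy; have Ne := Hp x y Hx Hy Hxy; rewrite /c'.
  case: ifP => HxY; case: ifP => HyY.
  - by apply/negP => /eqP /(fi _ _ HxY HyY) E; move: Ne; rewrite E eqxx.
  - apply/eqP => E; move: HyY; rewrite -E.
    by move/subsetP: fY => /(_ _ (imset_f f HxY)) ->.
  - apply/eqP => E; move: HxY; rewrite E.
    by move/subsetP: fY => /(_ _ (imset_f f HyY)) ->.
  - exact: Ne.
have [a Ha] := set0Pn _ Y0.
have /imsetP [v Hv Ev] := subsetP QP _ (subsetP YQ _ Ha).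
have := Hu c' Hc v Hv; rewrite /c' -Ev Ha.
by have [_ /eqP] := Hf a (subsetP YQ _ Ha).
Qed.

Lemma count_cls (T K : finType) (P : {set T}) (c : T -> K) (D : {set K}) :
  (forall b, b \in D -> 1 < #|[set v in P | c v == b]|) -> D \subset c @: P ->
  #|c @: P| + #|D| <= #|P|.
Proof.
move=> HD DC.
have E : #|P| = \sum_(b in c @: P) #|[set v in P | c v == b]|.
  rewrite -sum1_card (@partition_big_imset _ _ _ _ _ c); apply: eq_bigr => b _.
  by rewrite -sum1_card; apply: eq_bigl => v; rewrite inE.
rewrite E.
have E2 : #|D| = \sum_(b in c @: P) (b \in D).
  rewrite -sum1_card; transitivity (\sum_(b in c @: P | b \in D) 1).
    apply: eq_bigl => b; rewrite andb_idl //; exact: (subsetP DC).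
  by rewrite big_mkcondr; apply: eq_bigr => b _; case: (b \in D).
rewrite E2 -sum1_card -big_split /=; apply: leq_sum => b Hb.
case: (boolP (b \in D)) => Hd; first by rewrite addn1 HD.
rewrite addn0 card_gt0; apply/set0Pn.
by case/imsetP: Hb => v Hv ->; exists v; rewrite inE Hv eqxx.
Qed.

Lemma core (T K : finType) (e : rel T) : forall n (P : {set T}) (L : T -> {set K}) (c : T -> K) k,
  #|P| <= n -> isUniq e P L c -> (forall v, v \in P -> k <= #|L v|) -> P != set0 ->
  3 * k - 2 <= #|P|.
Proof.
elim=> [|n IH] P L c k Hn HU Hk P0.
  by move: P0; rewrite -card_gt0; move: Hn; case: #|P|.
have Pgt0 : 0 < #|P| by rewrite card_gt0.
case: (leqP k 1) => Hk1; first by lia.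
have [[HL Hp] Hu] := HU.
pose cls a := [set v in P | c v == a].
have clsP : forall a v, (v \in cls a) = (v \in P) && (c v == a) by move=> a v; rewrite inE.
have alt : forall v, v \in P -> exists b, b \in L v :\ c v.
  move=> v Hv; apply/set0Pn; rewrite -card_gt0.
  have := Hk v Hv; rewrite (cardsD1 (c v) (L v)) (HL v Hv); lia.
case: (boolP [exists a, 2 < #|cls a|]).
  move=> /existsP [a Ha].
  pose P' := P :\: cls a.
  pose L' v := L v :\ a.
  have HU' : isUniq e P' L' c.
    split.
      split.
        move=> v; rewrite /L' !inE => /andP [Hn1 Hv].
        by move: Hn1; rewrite Hv /= => ->; rewrite HL.
      move=> x y; rewrite !inE => /andP [_ Hx] /andP [_ Hy]; exact: Hp.
    move=> c' [HL' Hp'] v Hv.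
    pose c'' u := if u \in cls a then a else c' u.
    have Hc : isCol e P L c''.
      split.
        move=> u Hu'; rewrite /c''; case: ifP => Hc.
          by move: Hc; rewrite clsP => /andP [_ /eqP <-]; apply: HL.
        have : u \in P' by rewrite inE Hc Hu'.
        by move/HL'; rewrite inE => /andP [].
      move=> x y Hx Hy Hxy; rewrite /c''.
      case: ifP => Hcx; case: ifP => Hcy.
      - move: Hcx Hcy; rewrite !clsP => /andP [_ /eqP E1] /andP [_ /eqP E2].
        by have := Hp x y Hx Hy Hxy; rewrite E1 E2 eqxx.
      - have : y \in P' by rewrite inE Hcy Hy.
        by move/HL'; rewrite /L' !inE => /andP [H _]; rewrite eq_sym.
      - have : x \in P' by rewrite inE Hcx Hx.
        by move/HL'; rewrite /L' !inE => /andP [H _].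
      - by apply: Hp'; rewrite // inE ?Hcx ?Hcy ?Hx ?Hy.
    have := Hu c'' Hc v (subsetP (subsetDl P (cls a)) _ Hv).
    by rewrite /c''; move: Hv; rewrite inE => /andP [/negbTE -> _].
  have Hk' : forall v, v \in P' -> k.-1 <= #|L' v|.
    move=> v Hv; have := Hk v (subsetP (subsetDl P (cls a)) _ Hv).
    rewrite (cardsD1 a (L v)) /L'; case: (a \in L v) => /=; lia.
  have clsS : cls a \subset P by apply/subsetP => v; rewrite clsP => /andP [].
  have Ecard : #|P| = #|cls a| + #|P'|.
    rewrite -(cardsID (cls a) P) /P'; congr (_ + _).
    by rewrite (setIidPr clsS).
  case: (boolP (P' == set0)) => P'0.
    exfalso; have [v Hv] := set0Pn _ P0.
    have [b Hb] := alt v Hv.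
    move: (Hb); rewrite !inE => /andP [Nb Hbl].
    have /imsetP [u Hu0 Eb] := L0 HU Hv Hbl.
    have inA : forall w, w \in P -> c w = a.
      move=> w Hw; apply/eqP.
      case: (boolP (w \in cls a)) => [|Hw']; first by rewrite clsP => /andP [].
      have : w \in P' by rewrite inE Hw' Hw.
      by rewrite (eqP P'0) inE.
    by move: Nb; rewrite Eb (inA u Hu0) (inA v Hv) eqxx.
  have := IH P' L' c k.-1 _ HU' Hk' P'0.
  move: Ha; rewrite Ecard; lia.
rewrite negb_exists => /forallP H2.
have H2' : forall a, #|cls a| <= 2 by move=> a; have := H2 a; rewrite ltnNge negbK.
have clsa : forall a v, v \in P -> c v = a -> v \in cls a.
  by move=> a0 v Hv Ev; rewrite clsP Hv Ev eqxx.
pose Col := c @: P.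
have Col0 : Col != set0.
  by have [v Hv] := set0Pn _ P0; apply/set0Pn; exists (c v); apply: imset_f.
have [a Ha Sa] := sink HU (subxx Col) Col0.
have /imsetP [u Hu1 Eu] := Ha.
have [w /and3P [Hw /eqP Ew Nwu]] : exists w, [&& w \in P, c w == a & w != u].
  case: (boolP [exists w, [&& w \in P, c w == a & w != u]]) => [/existsP //|Hno].
  exfalso.
  have [b Hb] := alt u Hu1. move: (Hb); rewrite !inE => /andP [Nb Hbl].
  have bC : b \in Col := L0 HU Hu1 Hbl.
  have Nba : b != a by rewrite Eu.
  have := Sa b bC Nba.
  move/negP; apply; apply/forall_inP => v Hv; apply/implyP => /eqP Ev.
  case: (eqVneq v u) => [->//|Nv]; exfalso.
  move: Hno; rewrite negb_exists => /forallP /(_ v).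
  by rewrite Hv Ev eqxx Nv.
have inuw : forall v, v \in P -> c v = a -> v = u \/ v = w.
  move=> v Hv Ev; case: (eqVneq v u) => [->|Nv]; first by left.
  right.
  have Hle : #|cls a :\ u| <= 1.
    have := H2' a; rewrite (cardsD1 u (cls a)) (clsa a u Hu1 (esym Eu)); lia.
  apply: (card_le1_eqP Hle); rewrite !inE ?Nv ?Nwu ?Hv ?Hw ?Ev ?Ew eqxx //.
have arrab : forall b, b \in L u -> b \in L w -> arr P L c a b.
  move=> b Hbu Hbw; apply/forall_inP => v Hv; apply/implyP => /eqP Ev.
  by case: (inuw v Hv Ev) => ->.
have Hcol : 2 * (k - 1) + 1 <= #|Col|.
  have Hsub : (L u :\ a) :|: (L w :\ a) \subset Col :\ a.
    apply/subsetP => b; rewrite !inE => /orP [] /andP [Nb Hb]; rewrite Nb /=.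
      exact: L0 HU Hu1 Hb.
    exact: L0 HU Hw Hb.
  have Hcap : (L u :\ a) :&: (L w :\ a) = set0.
    apply/setP => b; rewrite !inE.
    case: (boolP (b == a)) => //= Nb; apply/negP => /andP [Hbu Hbw].
    by have := Sa b (L0 HU Hu1 Hbu) Nb; rewrite arrab.
  have := subset_leq_card Hsub; rewrite cardsU Hcap cards0 subn0.
  rewrite [X in _ -> _ <= X](cardsD1 a Col) Ha.
  have := Hk u Hu1; have := Hk w Hw.
  rewrite (cardsD1 a (L u)) (cardsD1 a (L w)).
  case: (a \in L u); case: (a \in L w) => /=; lia.
pose D2 := [set b in Col | 1 < #|cls b|].
have HD2 : k - 1 <= #|D2|.
  case: (boolP (Col :\: D2 == set0)) => B0.
    have : Col \subset D2 by rewrite -setD_eq0.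
    move/subset_leq_card; lia.
  have [bt Hbt Sb] := sink HU (subsetDl Col D2) B0.
  move: (Hbt); rewrite !inE => /andP [Nd HbC].
  rewrite HbC /= -leqNgt in Nd.
  have /imsetP [x Hx Ex] := HbC.
  have onlyx : forall v, v \in P -> c v = bt -> v = x.
    move=> v Hv Ev; apply: (card_le1_eqP Nd); rewrite !inE ?Hv ?Hx ?Ev ?Ex eqxx //.
  have Hsub : L x :\ bt \subset D2.
    apply/subsetP => g; rewrite !inE => /andP [Ng Hg].
    have gC := L0 HU Hx Hg.
    rewrite gC /=; case: (boolP (1 < #|cls g|)) => // Ng2.
    have gB : g \in Col :\: D2 by rewrite !inE gC (negbTE Ng2).
    have := Sb g gB Ng; rewrite -[false]/(~~ true); apply: contra => _.
    apply/forall_inP => v Hv; apply/implyP => /eqP Ev.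
    by rewrite (onlyx v Hv Ev).
  have := subset_leq_card Hsub; have := Hk x Hx.
  rewrite (cardsD1 bt (L x)) Ex (HL x Hx) /=; lia.
have D2C : D2 \subset Col by apply/subsetP => b; rewrite inE => /andP [].
have H : forall b, b \in D2 -> 1 < #|[set v in P | c v == b]|.
  by move=> b; rewrite inE => /andP [].
have HH : #|Col| + #|D2| <= #|P| := count_cls H D2C.
lia.
Qed.

Lemma bound_thm (T : finType) (e : rel T) k (L : T -> seq nat) :
  k_list_assignment k L -> unique_L_colorable e L -> 0 < #|T| -> 3 * k - 2 <= #|T|.
Proof.
move=> HkL [c [[Hin Hpr] Hu]] T0.
pose M := \max_(v : T) \max_(x <- L v) x.
have HM : forall v x, x \in L v -> x < M.+1.
  move=> v x Hx; rewrite ltnS.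
  have H1 : x <= \max_(y <- L v) y := @leq_bigmax_seq _ (L v) (fun _ => true) (fun y => y) x Hx isT.
  have H2 := @leq_bigmax T (fun v => \max_(y <- L v) y) v.
  exact: leq_trans H1 H2.
pose Lk v : {set 'I_M.+1} := [set i : 'I_M.+1 | val i \in L v].
pose ck v : 'I_M.+1 := inord (c v).
have HU : isUniq e [set: T] Lk ck.
  split.
    split.
      by move=> v _; rewrite inE /ck /= inordK ?Hin // (HM v).
    move=> x y _ _ Hxy; apply/negP => /eqP E.
    have := congr1 val E; rewrite /ck /= !inordK ?(HM x _ (Hin x)) ?(HM y _ (Hin y)) // => E'.
    by have := Hpr x y Hxy; rewrite E' eqxx.
  move=> c' [HL' Hp'] v _.
  pose cn u := val (c' u).
  have Hc : L_coloring e L cn.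
    split; first by move=> u; have := HL' u (in_setT u); rewrite inE.
    move=> x y Hxy; have := Hp' x y (in_setT x) (in_setT y) Hxy.
    by apply: contra => /eqP E; apply/eqP; apply: val_inj.
  apply: val_inj; rewrite /ck /= inordK ?(HM v _ (Hin v)) //.
  exact: Hu cn Hc v.
have Hk : forall v, v \in [set: T] -> k <= #|Lk v|.
  move=> v _; have [Hun Hs] := HkL v.
  pose s' := map (@inord M) (L v).
  have Us : uniq s'.
    rewrite map_inj_in_uniq // => x y Hx Hy E.
    by have := congr1 val E; rewrite /= !inordK ?(HM v _ Hx) ?(HM v _ Hy).
  rewrite -Hs -(size_map (@inord M)) -/s' -(card_uniqP Us).
  apply: subset_leq_card; apply/subsetP => i /mapP [x Hx ->].
  by rewrite inE /= inordK ?(HM v _ Hx).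
have P0 : [set: T] != set0 by rewrite -card_gt0 cardsT.
have := core (leqnn _) HU Hk P0.
by rewrite cardsT.
Qed.

Lemma min_ex (Q : nat -> Prop) : forall j i, i <= j -> Q i ->
  exists m, [/\ Q m, m <= i & forall k, k < m -> ~ Q k].
Proof.
elim=> [|j IH] i Hi Qi.
  exists i; split => // k Hk; by move: Hi Hk; case: i {Qi}.
case: (classic (exists k, k < i /\ Q k)) => [[k [Hk Qk]]|Hn].
  have Hkj : k <= j by lia.
  have [m [Qm Hm Hmin]] := IH k Hkj Qk.
  by exists m; split => //; lia.
exists i; split => // k Hk Qk; apply: Hn; by exists k.
Qed.

Theorem corollary2p3 (T : finType) (e : rel T) :
  simple_graph e -> 1 <= #|T| ->
  exists m, is_m_number e m /\ m <= ceil_div #|T| 3 + 1.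
Proof.
move=> _ HT.
have HM : propM e (ceil_div #|T| 3 + 1).
  move=> [L [HkL HuL]].
  have := bound_thm HkL HuL HT.
  rewrite /ceil_div /=; lia.
have [m [[Hm1 Hm] Hle Hmin]] :=
  @min_ex (fun k => 1 <= k /\ propM e k) _ _ (leqnn _) (conj (leq_addl _ _) HM).
exists m; split => //; split => //; split => // k Hk1 Hkm Hk.
exact: Hmin k Hkm (conj Hk1 Hk).
Qed.
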